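(* Let $\ell:\mathcal{R}\to\mathbb{R}^{\mathcal{Y}}_+$ be a discrete loss and $L:\mathbb{R}^d\to\mathbb{R}^{\mathcal{Y}}_+$ a minimizable loss. Then $L$ embeds $\ell$ if and only if their Bayes risks coincide: $\underline{L}(p)=\underline{\ell}(p)$ for all $p\in\Delta_{\mathcal{Y}}$.
   Context: $\mathcal{Y}$ is a finite label set, $\Delta_{\mathcal{Y}}$ the simplex, $\mathbb{R}^{\mathcal{Y}}_+$ the nonnegative orthant. For a loss $L:\mathcal{R}\to\mathbb{R}^{\mathcal{Y}}_+$, the Bayes risk is $\underline{L}(p)=\inf_{r\in\mathcal{R}}\langle p,L(r)\rangle$. Discrete: $\mathcal{R}$ finite. Minimizable: the infimum is attained for every $p$; then $\mathrm{prop}[L](p)=\arg\min_r\langle p,L(r)\rangle$. $\mathcal{S}$ is representative for $L$ if $\mathrm{prop}[L](p)\cap\mathcal{S}\neq\emptyset$ for all $p$. $L$ embeds $\ell$ if there exist a representative set $\mathcal{S}$ for $\ell$ and an injective $\varphi:\mathcal{S}\to\mathbb{R}^d$ with (i) $L(\varphi(r))=\ell(r)$ for $r\in\mathcal{S}$ and (ii) $r\in\mathrm{prop}[\ell](p)\iff\varphi(r)\in\mathrm{prop}[L](p)$ for all $p$, $r\in\mathcal{S}$. *)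

(* Defs.v *)
From HB Require Import structures.
From mathcomp Require Import all_boot all_order all_algebra.
From mathcomp Require Import boolp classical_sets reals.
Set Implicit Arguments. Unset Strict Implicit. Unset Printing Implicit Defensive.
Import Order.TTheory GRing.Theory Num.Theory.
Local Open Scope ring_scope.
Local Open Scope classical_set_scope.

Section Losses.
Variables (R : realType) (Y : finType).

Definition simplex : set (Y -> R) :=
  [set p | (forall y, 0 <= p y) /\ \sum_(y : Y) p y = 1].

(* A loss is a map from reports to R^Y; nonnegativity is a separate hypothesis. *)
Definition nonneg_loss (Rep : Type) (L : Rep -> Y -> R) : Prop :=
  forall r y, 0 <= L r y.

Definition exp_loss (Rep : Type) (L : Rep -> Y -> R) (p : Y -> R) (r : Rep) : R :=
  \sum_(y : Y) p y * L r y.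

Definition bayes_risk (Rep : Type) (L : Rep -> Y -> R) (p : Y -> R) : R :=
  inf (range (exp_loss L p)).

Definition prop (Rep : Type) (L : Rep -> Y -> R) (p : Y -> R) : set Rep :=
  [set r | forall r', exp_loss L p r <= exp_loss L p r'].

Definition minimizable (Rep : Type) (L : Rep -> Y -> R) : Prop :=
  forall p, simplex p -> exists r, exp_loss L p r = bayes_risk L p.

Definition representative (Rep : Type) (L : Rep -> Y -> R) (S : set Rep) : Prop :=
  forall p, simplex p -> prop L p `&` S !=set0.

Definition embeds (d : nat) (L : 'rV[R]_d -> Y -> R) (Rep : Type)
    (ell : Rep -> Y -> R) : Prop :=
  exists (S : set Rep) (phi : Rep -> 'rV[R]_d),
    [/\ representative ell S,
        (forall r1 r2, S r1 -> S r2 -> phi r1 = phi r2 -> r1 = r2),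
        (forall r, S r -> L (phi r) = ell r) &
        (forall p r, simplex p -> S r -> (prop ell p r <-> prop L p (phi r)))].

End Losses.

(* Main.v *)
Require Import Defs.
From HB Require Import structures.
From mathcomp Require Import all_boot all_order all_algebra.
From mathcomp Require Import boolp classical_sets reals.
From mathcomp Require Import ring lra.
Import Order.TTheory GRing.Theory Num.Theory.
Local Open Scope ring_scope.
Local Open Scope classical_set_scope.

Section Aux.
Variable R : realType.

Lemma fin_argmin (I : finType) (P : pred I) (F : I -> R) (i0 : I) :
  P i0 -> exists i, P i /\ forall j, P j -> F i <= F j.
Proof.
move=> Pi0.
suff H : forall s : seq I, exists i, P i /\ forall j, j \in s -> P j -> F i <= F j.
  by have [i [Pi Hi]] := H (enum I); exists i; split => // j Pj; apply: Hi; rewrite ?mem_enum.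
elim=> [|j s [i [Pi IH]]]; first by exists i0; split.
case: (boolP (P j)) => Pj; last first.
  exists i; split => // k; rewrite inE => /orP[/eqP->|ks Pk]; first by rewrite (negbTE Pj).
  exact: IH.
case: (leP (F i) (F j)) => Hij.
  exists i; split => // k; rewrite inE => /orP[/eqP->//|ks Pk]; exact: IH.
exists j; split => // k; rewrite inE => /orP[/eqP->//|ks Pk].
by apply: le_trans (ltW Hij) (IH k ks Pk).
Qed.

Lemma small_t (I : finType) (P : pred I) (a b : I -> R) :
  (forall i, P i -> 0 < a i) ->
  exists2 t, 0 < t & forall s, 0 < s -> s <= t -> forall i, P i -> 0 < a i + s * b i.
Proof.
move=> Ha.
suff H : forall l : seq I, exists2 t, 0 < t &
    forall s, 0 < s -> s <= t -> forall i, i \in l -> P i -> 0 < a i + s * b i.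
  have [t t0 Ht] := H (enum I); exists t => // s s0 st i Pi.
  by apply: Ht => //; rewrite mem_enum.
elim=> [|j l [t t0 IH]]; first by exists 1 => //.
case: (boolP (P j)) => Pj; last first.
  exists t => // s s0 st i; rewrite inE => /orP[/eqP->|il Pi]; first by rewrite (negbTE Pj).
  exact: IH.
have aj := Ha j Pj.
have bp : 0 < `|b j| + 1 by rewrite ltr_wpDl.
set tj := a j / (`|b j| + 1).
have tj0 : 0 < tj by rewrite divr_gt0.
exists (Num.min t tj); first by rewrite lt_min t0 tj0.
move=> s s0; rewrite le_min => /andP[st stj] i; rewrite inE => /orP[/eqP->|il Pi]; last first.
  exact: IH.
move=> _.
have h1 : s * (`|b j| + 1) <= a j by rewrite -ler_pdivlMr.
have h2 : - `|b j| <= b j by rewrite lerNl -normrN ler_norm.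
have h3 : s * (- `|b j|) <= s * b j by rewrite ler_wpM2l // ltW.
nra.
Qed.

Lemma inf_min (T : Type) (E : T -> R) (x : T) :
  (forall y, E x <= E y) -> inf (range E) = E x.
Proof.
move=> H; apply/eqP; rewrite eq_le; apply/andP; split.
  have : has_lbound (range E) by exists (E x) => _ [y _ <-].
  by move/ge_inf; apply; exists x.
by apply: lb_le_inf; [exists (E x), x | move=> _ [y _ <-]].
Qed.

Lemma inf_le0 (T : Type) (E : T -> R) (x : T) :
  (forall y, 0 <= E y) -> inf (range E) <= E x.
Proof.
move=> H; have : has_lbound (range E) by exists 0 => _ [y _ <-].
by move/ge_inf; apply; exists x.
Qed.

End Aux.
Arguments fin_argmin {R I P} F i0.
Arguments small_t {R I} P a b.
Arguments inf_min {R T E x}.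
Arguments inf_le0 {R T E} x.

Section Sums.
Variables (R : realType) (Y : finType).

Lemma sum_delta (i : Y) (g : Y -> R) : \sum_y (y == i)%:R * g y = g i.
Proof.
rewrite (bigD1 i) //= eqxx mul1r big1 ?addr0 // => y /negbTE ->.
by rewrite mul0r.
Qed.

Lemma sum_shift (q g : Y -> R) (s : R) (i j : Y) :
  \sum_y (q y + s * ((y == i)%:R - (y == j)%:R)) * g y =
  \sum_y q y * g y + s * (g i - g j).
Proof.
rewrite -(sum_delta i g) -(sum_delta j g) -sumrB mulr_sumr -big_split /=.
by apply: eq_bigr => y _; ring.
Qed.

Lemma sum_mix (p m g : Y -> R) (e : R) :
  \sum_y ((1 - e) * p y + e * m y) * g y =
  (1 - e) * \sum_y p y * g y + e * \sum_y m y * g y.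
Proof.
rewrite !mulr_sumr -big_split /=; apply: eq_bigr => y _; ring.
Qed.

End Sums.
Arguments sum_delta {R Y}.
Arguments sum_shift {R Y}.
Arguments sum_mix {R Y}.

Section Main.
Variables (R : realType) (Y : finType) (Rep : finType) (d : nat)
  (ell : Rep -> Y -> R) (L : 'rV[R]_d -> Y -> R).
Hypotheses (ell0 : nonneg_loss ell) (L0 : nonneg_loss L) (minL : minimizable L)
  (Hrisk : forall p, simplex p -> bayes_risk L p = bayes_risk ell p).

Lemma exp_ge0 (T : Type) (M : T -> Y -> R) p x :
  nonneg_loss M -> (forall y, 0 <= p y) -> 0 <= exp_loss M p x.
Proof. by move=> H Hp; apply: sumr_ge0 => y _; rewrite mulr_ge0. Qed.

Lemma lemT (q : Y -> R) (rs : Rep) :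
  simplex q -> (forall y, 0 < q y) ->
  (forall r, ell r <> ell rs -> exp_loss ell q rs < exp_loss ell q r) ->
  exists u, L u = ell rs.
Proof.
move=> [q0 q1] qpos Hstr.
have Hmin : forall r, exp_loss ell q rs <= exp_loss ell q r.
  move=> r; case: (pselect (ell r = ell rs)) => [E|/Hstr/ltW//].
  by rewrite /exp_loss E.
have [u Hu0] := @minL q (conj q0 q1).
have Hu : exp_loss L q u = exp_loss ell q rs.
  by rewrite Hu0 Hrisk // /bayes_risk (inf_min Hmin).
exists u; set w := L u; set v := ell rs.
have D : forall i j, w j - v j <= w i - v i.
  move=> i j; case: (eqVneq i j) => [->//|ij].
  pose P := fun r => `[< ell r <> ell rs >].
  have Pa : forall r, P r -> 0 < exp_loss ell q r - exp_loss ell q rs.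
    by move=> r Pr; rewrite subr_gt0; apply: Hstr; apply/asboolP.
  have [t t0 Ht] := small_t P (fun r => exp_loss ell q r - exp_loss ell q rs)
     (fun r => ell r i - ell rs i - (ell r j - ell rs j))
     Pa.
  set s := Num.min t (q j).
  have s0 : 0 < s by rewrite lt_min t0 qpos.
  have st : s <= t by rewrite ge_min lexx.
  have sq : s <= q j by rewrite ge_min lexx orbT.
  pose x := fun y => q y + s * ((y == i)%:R - (y == j)%:R).
  have xs : simplex x.
    split.
      move=> y; rewrite /x /=; case: eqP => [->|_]; case: eqP => [E|_].
      - by rewrite E eqxx in ij.
      - by rewrite subr0 mulr1 addr_ge0 // ltW.
      - by rewrite E sub0r mulrN1 subr_ge0.
      - by rewrite subrr mulr0 addr0.
    have H := sum_shift q (fun _ => 1) s i j; simpl in H.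
    rewrite subrr mulr0 addr0 in H.
    have E1 : \sum_y x y = \sum_y (q y + s * ((y == i)%:R - (y == j)%:R)) * 1.
      by apply: eq_bigr => y _; rewrite mulr1.
    rewrite E1 H -[RHS]q1; apply: eq_bigr => y _; exact: mulr1.
  have Hx : forall g : Y -> R, \sum_y x y * g y = \sum_y q y * g y + s * (g i - g j).
    by move=> g; apply: sum_shift.
  have minx : forall r, exp_loss ell x rs <= exp_loss ell x r.
    move=> r; case: (pselect (ell r = ell rs)) => [E|ne]; first by rewrite /exp_loss E.
    rewrite /exp_loss !Hx -subr_ge0 ltW //.
    have := Ht s s0 st r (introT (asboolP _) ne).
    by rewrite /exp_loss; congr (0 < _); ring.
  have := inf_le0 u (fun u' => @exp_ge0 _ L x u' L0 (proj1 xs)).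
  rewrite -/(bayes_risk L x) Hrisk // /bayes_risk (inf_min minx) /exp_loss !Hx.
  rewrite /exp_loss in Hu; rewrite Hu -subr_ge0.
  have -> : \sum_y q y * ell rs y + s * (w i - w j) - (\sum_y q y * ell rs y + s * (v i - v j))
     = s * ((w i - v i) - (w j - v j)) by rewrite /v; ring.
  by rewrite pmulr_rge0 // subr_ge0.
apply: funext => y.
have Ey : forall j, w j - v j = w y - v y.
  by move=> j; apply/eqP; rewrite eq_le !D.
have : \sum_j q j * (w j - v j) = 0.
  rewrite /exp_loss in Hu.
  under eq_bigr do rewrite mulrBr.
  by rewrite sumrB; apply/eqP; rewrite subr_eq0; apply/eqP; exact: Hu.
under eq_bigr do rewrite Ey; rewrite -mulr_suml q1 mul1r => /eqP.
by rewrite subr_eq0 => /eqP.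
Qed.

Lemma propE (T : Type) (M : T -> Y -> R) p x :
  nonneg_loss M -> (forall y, 0 <= p y) ->
  (prop M p x <-> exp_loss M p x = bayes_risk M p).
Proof.
move=> HM Hp; split => [H|E].
  by rewrite /bayes_risk (inf_min (E:=exp_loss M p) H).
move=> x'; rewrite E; apply: inf_le0 => y; exact: exp_ge0.
Qed.

Lemma lemK (r0 : Rep) p : simplex p -> exists r, prop ell p r /\ exists u, L u = ell r.
Proof.
move=> [p0 p1].
have [y0 _] : exists y : Y, true.
  case: (pickP (@predT Y)) => [y _|H]; first by exists y.
  move: p1; rewrite big1 => [/eqP|i _]; first by rewrite eq_sym oner_eq0.
  by have := H i.
have [r1 [_ Hr1]] := fin_argmin (P:=predT) (fun r => exp_loss ell p r) r0 erefl.
pose A := fun r => exp_loss ell p r == exp_loss ell p r1.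
pose K0 := 1 + \sum_r \sum_y ell r y.
have le_sum1 : forall (I : finType) (G : I -> R) i, (forall j, 0 <= G j) -> G i <= \sum_j G j.
  by move=> I G i HG; rewrite (bigD1 i) //= lerDl sumr_ge0.
have HK : forall r y, ell r y < K0.
  move=> r y; apply: (le_lt_trans (le_sum1 Y (ell r) y (ell0 r))).
  apply: (le_lt_trans (le_sum1 Rep (fun r => \sum_y ell r y) r _)); last by rewrite /K0 ltrDr.
  by move=> j; apply: sumr_ge0 => k _.
pose F r := - \sum_y (ell r y - K0)^+2.
have [rs [Ars Hrs]] := fin_argmin (P:=A) F r1 (eqxx _).
pose z y := K0 - ell rs y.
have zpos : forall y, 0 < z y by move=> y; rewrite subr_gt0.
pose Z := \sum_y z y.
have Zpos : 0 < Z.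
  rewrite /Z (bigD1 y0) //=; have := zpos y0.
  have : 0 <= \sum_(i | i != y0) z i by apply: sumr_ge0 => i _; exact: ltW.
  lra.
pose m y := z y / Z.
have hm : forall r, A r -> ell r <> ell rs -> exp_loss ell m rs < exp_loss ell m r.
  move=> r Ar ne.
  have [y1 ny1] : exists y, ell r y <> ell rs y.
    case: (pselect (exists y, ell r y <> ell rs y)) => // N; exfalso; apply: ne.
    apply: funext => y; case: (pselect (ell r y = ell rs y)) => // N'.
    by exfalso; apply: N; exists y.
  have D : 0 < \sum_y (ell r y - ell rs y)^+2.
    rewrite (bigD1 y1) //=.
    have : 0 <= \sum_(i | i != y1) (ell r i - ell rs i)^+2 by apply: sumr_ge0 => i _; exact: sqr_ge0.
    have : 0 < (ell r y1 - ell rs y1)^+2.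
      rewrite lt0r sqr_ge0 andbT sqrf_eq0 subr_eq0; apply/eqP; exact: ny1.
    lra.
  have G := Hrs r Ar; rewrite /F lerN2 in G.
  have Id : 2 * \sum_y z y * (ell r y - ell rs y) =
      \sum_y (ell r y - ell rs y)^+2 + (\sum_y (ell rs y - K0)^+2 - \sum_y (ell r y - K0)^+2).
    rewrite mulr_sumr -sumrB -big_split /=; apply: eq_bigr => y _; rewrite /z; ring.
  have S0 : 0 < \sum_y z y * (ell r y - ell rs y) by lra.
  rewrite /exp_loss -subr_gt0 -sumrB.
  have -> : \sum_y (m y * ell r y - m y * ell rs y) = Z^-1 * \sum_y z y * (ell r y - ell rs y).
    by rewrite mulr_sumr; apply: eq_bigr => y _; rewrite /m; ring.
  by rewrite mulr_gt0 // invr_gt0.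
have ArsE : exp_loss ell p rs = exp_loss ell p r1 by apply/eqP.
have Pa : forall r, ~~ A r -> 0 < exp_loss ell p r - exp_loss ell p rs.
  by move=> r nA; rewrite ArsE subr_gt0 lt_neqAle eq_sym nA Hr1.
have [t t0 Ht] := small_t (fun r => ~~ A r) (fun r => exp_loss ell p r - exp_loss ell p rs)
   (fun r => (exp_loss ell m r - exp_loss ell m rs) - (exp_loss ell p r - exp_loss ell p rs)) Pa.
set e := Num.min t 1.
have e0 : 0 < e by rewrite lt_min t0 ltr01.
have et : e <= t by rewrite ge_min lexx.
have e1 : e <= 1 by rewrite ge_min lexx orbT.
pose q y := (1 - e) * p y + e * m y.
have mpos : forall y, 0 < m y by move=> y; rewrite /m divr_gt0.
have qpos : forall y, 0 < q y.
  move=> y; rewrite /q; have := mpos y; have := p0 y.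
  have : 0 <= 1 - e by rewrite subr_ge0.
  nra.
have m1 : \sum_y m y = 1 by rewrite /m -mulr_suml divff // gt_eqF.
have qs : simplex q.
  split; first by move=> y; exact: ltW.
  by rewrite /q big_split /= -!mulr_sumr p1 m1 !mulr1 subrK.
have Hmix : forall r, exp_loss ell q r = (1 - e) * exp_loss ell p r + e * exp_loss ell m r.
  by move=> r; rewrite /exp_loss sum_mix.
have [u Hu] : exists u, L u = ell rs.
  apply: (@lemT q rs qs qpos) => r ne; rewrite !Hmix.
  case: (boolP (A r)) => Ar.
    have Ep : exp_loss ell p r = exp_loss ell p rs by rewrite ArsE; apply/eqP.
    have := hm r Ar ne; rewrite Ep; nra.
  have := Ht e e0 et r Ar; nra.
exists rs; split; last by exists u.
by move=> r'; rewrite /= ArsE; exact: Hr1.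
Qed.

End Main.
Theorem proposition2 (R : realType) (Y : finType) (Rep : finType) (r0 : Rep)
    (d : nat) (ell : Rep -> Y -> R) (L : 'rV[R]_d -> Y -> R) :
  nonneg_loss ell -> nonneg_loss L -> minimizable L ->
  (embeds L ell <-> forall p, simplex p -> bayes_risk L p = bayes_risk ell p).
Proof.
move=> ell0 L0 minL; split.
  move=> [S [phi [Hrep Hinj Hphi Hprop]]] p sp.
  have [r [Pr Sr]] := Hrep p sp.
  have Pphi := (Hprop p r sp Sr).1 Pr.
  rewrite /bayes_risk (inf_min (E:=exp_loss L p) Pphi) (inf_min (E:=exp_loss ell p) Pr).
  by rewrite /exp_loss Hphi.
move=> Hrisk.
pose Pu r := exists u, L u = ell r.
have Hex : forall r, exists u : 'rV[R]_d, Pu r -> L u = ell r.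
  move=> r; case: (pselect (Pu r)) => [[u Hu]|N]; first by exists u.
  by exists 0.
have [phi Hphi] := choice Hex.
pose cls r := xget r0 [set r' | ell r' = ell r].
have clsE r : ell (cls r) = ell r by apply: (@xgetPex _ r0 [set r' | ell r' = ell r]); exists r.
have clsC r1 r2 : ell r1 = ell r2 -> cls r1 = cls r2 by rewrite /cls => ->.
exists [set r | Pu r /\ cls r = r], phi; split.
- move=> p sp; have [r [Pr [u Hu]]] := @lemK _ _ _ _ _ _ ell0 L0 minL Hrisk r0 p sp.
  exists (cls r); split; [|split].
  + by move=> r'; rewrite /exp_loss clsE; exact: Pr.
  + by exists u; rewrite clsE.
  + by apply: clsC; exact: clsE.
- move=> r1 r2 [P1 C1] [P2 C2] E.
  by rewrite -C1 -C2; apply: clsC; rewrite -(Hphi _ P1) -(Hphi _ P2) E.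
- by move=> r [Pr _]; exact: Hphi.
- move=> p r sp [Pr _].
  have EL : exp_loss L p (phi r) = exp_loss ell p r by rewrite /exp_loss Hphi.
  rewrite (@propE _ _ _ ell p r ell0 (proj1 sp)) (@propE _ _ _ L p (phi r) L0 (proj1 sp)).
  by rewrite EL Hrisk.
Qed.
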